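(* As $n\to\infty$, the ratio $|E(G_n)|/|E(SG(n,2))|$ tends to $2/3$.
   Context: Let $[n]=\{1,\dots,n\}$. A $2$-subset $\{a,b\}$ of $[n]$ with $a<b$ is called stable if $b \neq a+1$ and $\{a,b\}\neq\{1,n\}$; it is written $ab$. The Schrijver graph $SG(n,2)$ has as vertices all stable $2$-subsets of $[n]$, two being adjacent iff they are disjoint. For $n\ge 4$, the graph $G_n$ has the same vertex set; two vertices $ab$ ($a<b$) and $cd$ ($c<d$) with $a<c$ are adjacent in $G_n$ if and only if $\{a,b\}\cap\{c,d\}=\emptyset$ and either $a<c<b<d$, or $1<a<c<d<b$. *)

(* Defs.v *)
From mathcomp Require Import all_boot.
Set Implicit Arguments. Unset Strict Implicit. Unset Printing Implicit Defensive.

Definition stable (n a b : nat) : bool :=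
  [&& 1 <= a, a < b, b <= n, b != a.+1 & ~~ ((a == 1) && (b == n))].

Definition disj (a b c d : nat) : bool :=
  [&& a != c, a != d, b != c & b != d].

Definition SG_adj (a b c d : nat) : bool := disj a b c d.

Definition G_adj (a b c d : nat) : bool :=
  disj a b c d && ([&& a < c, c < b & b < d] || [&& 1 < a, a < c, c < d & d < b]).

(* Number of edges: each edge {ab, cd} is counted once, ordering its
   endpoints by a < c (a <> c holds for disjoint vertices). *)
Definition edge_count (adj : nat -> nat -> nat -> nat -> bool) (n : nat) : nat :=
  \sum_(a < n.+1) \sum_(b < n.+1) \sum_(c < n.+1) \sum_(d < n.+1)
    [&& stable n a b, stable n c d, a < c & adj a b c d].

Definition num_edges_SG (n : nat) : nat := edge_count SG_adj n.
Definition num_edges_G (n : nat) : nat := edge_count G_adj n.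

(* Main.v *)
Require Import Defs.
From mathcomp Require Import all_boot zify.
From Stdlib Require Import Reals Lra.
Set Implicit Arguments. Unset Strict Implicit.

Definition S4 (F : nat -> nat -> nat -> nat -> nat) (n : nat) : nat :=
  \sum_(a < n.+1) \sum_(b < n.+1) \sum_(c < n.+1) \sum_(d < n.+1) F a b c d.

Lemma S4_le F G n :
  (forall a b c d, a <= n -> b <= n -> c <= n -> d <= n -> F a b c d <= G a b c d) ->
  S4 F n <= S4 G n.
Proof.
move=> H; rewrite /S4; apply: leq_sum => a _; apply: leq_sum => b _;
apply: leq_sum => c _; apply: leq_sum => d _; by apply: H; rewrite -ltnS ltn_ord.
Qed.

Lemma S4_add F G n : S4 (fun a b c d => F a b c d + G a b c d) n = S4 F n + S4 G n.
Proof.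
rewrite /S4 -big_split; apply: eq_bigr => a _; rewrite -big_split;
apply: eq_bigr => b _; rewrite -big_split; apply: eq_bigr => c _; rewrite -big_split //.
Qed.

Lemma sum_const_ord N k : \sum_(i < N) k = N * k.
Proof. by rewrite big_const_ord iter_addn_0 mulnC. Qed.

Lemma sum_le_const N M (F : 'I_N -> nat) : (forall i, F i <= M) -> \sum_(i < N) F i <= N * M.
Proof. move=> H; rewrite -sum_const_ord; exact: leq_sum. Qed.

Lemma sum_eq1 N x : \sum_(i < N) ((i : nat) == x : nat) <= 1.
Proof.
suff: \sum_(i < N) ((i : nat) == x : nat) = (x < N) by move=> ->; case: (x < N).
elim: N => [|N IH]; first by rewrite big_ord0.
rewrite big_ord_recr /= IH; lia.
Qed.

Lemma err_d n (g : nat -> nat -> nat -> nat) :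
  S4 (fun a b c d => (d == g a b c : nat)) n <= n.+1 * (n.+1 * (n.+1 * 1)).
Proof.
rewrite /S4; apply: sum_le_const => a; apply: sum_le_const => b;
apply: sum_le_const => c; exact: sum_eq1.
Qed.

Lemma err_b n (g : nat -> nat) :
  S4 (fun a b c d => (b == g a : nat)) n <= n.+1 * (n.+1 * (n.+1 * 1)).
Proof.
rewrite /S4; apply: sum_le_const => a.
under eq_bigr => b _ do under eq_bigr => c _ do rewrite sum_const_ord.
under eq_bigr => b _ do rewrite sum_const_ord.
rewrite -!big_distrr /=. by rewrite !leq_mul2l sum_eq1 !orbT.
Qed.

Lemma err_a n k :
  S4 (fun a b c d => (a == k : nat)) n <= n.+1 * (n.+1 * (n.+1 * 1)).
Proof.
rewrite /S4.
under eq_bigr => a _ do under eq_bigr => b _ do under eq_bigr => c _ do rewrite sum_const_ord.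
under eq_bigr => a _ do under eq_bigr => b _ do rewrite sum_const_ord.
under eq_bigr => a _ do rewrite sum_const_ord.
rewrite -!big_distrr /=. by rewrite !leq_mul2l sum_eq1 !orbT.
Qed.

Definition P1 (a b c d : nat) : nat := [&& 1 <= a, a < b, b < c & c < d].
Definition P2 (a b c d : nat) : nat := [&& 1 <= a, a < c, c < b & b < d].
Definition P3 (a b c d : nat) : nat := [&& 1 <= a, a < c, c < d & d < b].

Lemma S4_P2 n : S4 P2 n = S4 P1 n.
Proof. rewrite /S4; apply: eq_bigr => a _; exact: exchange_big. Qed.

Lemma S4_P3 n : S4 P3 n = S4 P1 n.
Proof.
rewrite /S4; apply: eq_bigr => a _; rewrite exchange_big; apply: eq_bigr => c _.
exact: exchange_big.
Qed.

Lemma SG_S4 n : num_edges_SG n = S4 (fun a b c d => [&& stable n a b, stable n c d, a < c & SG_adj a b c d] : nat) n.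
Proof. by []. Qed.
Lemma G_S4 n : num_edges_G n = S4 (fun a b c d => [&& stable n a b, stable n c d, a < c & G_adj a b c d] : nat) n.
Proof. by []. Qed.

Lemma SG_up n : num_edges_SG n <= S4 P1 n + S4 P1 n + S4 P1 n.
Proof.
rewrite -{2}(S4_P2 n) -{2}(S4_P3 n) ?SG_S4 ?G_S4 -!S4_add; apply: S4_le => a b c d ha hb hc hd.
rewrite /SG_adj /stable /disj /P1 /P2 /P3; lia.
Qed.

Lemma G_up n : num_edges_G n <= S4 P1 n + S4 P1 n.
Proof.
rewrite -{1}(S4_P2 n) -{1}(S4_P3 n) ?SG_S4 ?G_S4 -!S4_add; apply: S4_le => a b c d ha hb hc hd.
rewrite /G_adj /stable /disj /P1 /P2 /P3; lia.
Qed.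

Lemma pat_le1 a b c d : P1 a b c d + P2 a b c d + P3 a b c d <= 1.
Proof. rewrite /P1 /P2 /P3; lia. Qed.

Lemma pat_le1' a b c d : P2 a b c d + P3 a b c d <= 1.
Proof. rewrite /P2 /P3; lia. Qed.

Lemma SG_pt n a b c d : b <= n -> d <= n -> b != a.+1 -> b != n -> d != c.+1 -> d != n ->
  P1 a b c d + P2 a b c d + P3 a b c d <= [&& stable n a b, stable n c d, a < c & SG_adj a b c d].
Proof. move=> *; rewrite /P1 /P2 /P3 /SG_adj /stable /disj; lia. Qed.

Lemma G_pt n a b c d : b <= n -> d <= n -> b != a.+1 -> b != n -> d != c.+1 -> d != n -> a != 1 ->
  P2 a b c d + P3 a b c d <= [&& stable n a b, stable n c d, a < c & G_adj a b c d].
Proof. move=> *; rewrite /P2 /P3 /G_adj /stable /disj; lia. Qed.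

Lemma or4_le (e1 e2 e3 e4 : bool) : ((e1 || e2 || e3 || e4) : nat) <= e1 + e2 + e3 + e4.
Proof. by case: e1; case: e2; case: e3; case: e4. Qed.

Lemma or5_le (e1 e2 e3 e4 e5 : bool) : ((e1 || e2 || e3 || e4 || e5) : nat) <= e1 + e2 + e3 + e4 + e5.
Proof. by case: e1; case: e2; case: e3; case: e4; case: e5. Qed.

Lemma SG_lo_pt n a b c d : b <= n -> d <= n ->
  P1 a b c d + P2 a b c d + P3 a b c d <=
  [&& stable n a b, stable n c d, a < c & SG_adj a b c d] +
  ((b == a.+1) + (b == n) + (d == c.+1) + (d == n)).
Proof.
move=> hb hd; apply: leq_trans _ (leq_add (leqnn _) (or4_le _ _ _ _)).
case E: (_ || _ || _ || _).
  exact: leq_trans (pat_le1 a b c d) (leq_addl _ _).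
move/norP: E => [/norP [/norP [h1 h2] h3] h4]; rewrite addn0; exact: SG_pt.
Qed.

Lemma G_lo_pt n a b c d : b <= n -> d <= n ->
  P2 a b c d + P3 a b c d <=
  [&& stable n a b, stable n c d, a < c & G_adj a b c d] +
  ((b == a.+1) + (b == n) + (d == c.+1) + (d == n) + (a == 1)).
Proof.
move=> hb hd; apply: leq_trans _ (leq_add (leqnn _) (or5_le _ _ _ _ _)).
case E: (_ || _ || _ || _ || _).
  exact: leq_trans (pat_le1' a b c d) (leq_addl _ _).
move/norP: E => [/norP [/norP [/norP [h1 h2] h3] h4] h5]; rewrite addn0; exact: G_pt.
Qed.

Lemma SG_lo n : S4 P1 n + S4 P1 n + S4 P1 n <= num_edges_SG n + 4 * (n.+1 * (n.+1 * (n.+1 * 1))).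
Proof.
have E1 := err_b n (fun a => a.+1).
have E2 := err_b n (fun a => n).
have E3 := err_d n (fun a b c => c.+1).
have E4 := err_d n (fun a b c => n).
apply: (@leq_trans (num_edges_SG n + (S4 (fun a b c d => (b == a.+1 : nat)) n +
   S4 (fun a b c d => (b == n : nat)) n + S4 (fun a b c d => (d == c.+1 : nat)) n +
   S4 (fun a b c d => (d == n : nat)) n))); last by lia.
rewrite -{2}(S4_P2 n) -{2}(S4_P3 n) ?SG_S4 ?G_S4 -!S4_add; apply: S4_le => a b c d ha hb hc hd.
exact: SG_lo_pt.
Qed.

Lemma G_lo n : S4 P1 n + S4 P1 n <= num_edges_G n + 5 * (n.+1 * (n.+1 * (n.+1 * 1))).
Proof.
have E1 := err_b n (fun a => a.+1).
have E2 := err_b n (fun a => n).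
have E3 := err_d n (fun a b c => c.+1).
have E4 := err_d n (fun a b c => n).
have E5 := err_a n 1.
apply: (@leq_trans (num_edges_G n + (S4 (fun a b c d => (b == a.+1 : nat)) n +
   S4 (fun a b c d => (b == n : nat)) n + S4 (fun a b c d => (d == c.+1 : nat)) n +
   S4 (fun a b c d => (d == n : nat)) n + S4 (fun a b c d => (a == 1 : nat)) n))); last by lia.
rewrite -{1}(S4_P2 n) -{1}(S4_P3 n) ?SG_S4 ?G_S4 -!S4_add; apply: S4_le => a b c d ha hb hc hd.
exact: G_lo_pt.
Qed.

Lemma range_nat (F : nat -> nat) lo K m :
  (forall i, lo <= i < lo + m -> K <= F i) -> m * K <= \sum_(lo <= i < lo + m) F i.
Proof.
elim: m => [|m IH] H; first by rewrite mul0n.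
rewrite addnS big_nat_recr ?leq_addr // mulSn addnC; apply: leq_add.
  apply: IH => i /andP [h1 h2]; apply: H; lia.
apply: H; lia.
Qed.

Lemma range_lb (F : nat -> nat) lo m K N :
  (forall i, lo <= i < lo + m -> K <= F i) -> lo + m <= N -> m * K <= \sum_(i < N) F i.
Proof.
move=> H hN; rewrite -(big_mkord xpredT F) (big_cat_nat (leq0n lo) (leq_trans (leq_addr m lo) hN)) /=.
rewrite (big_cat_nat (leq_addr m lo) hN) /=.
apply: leq_trans (range_nat H) _; lia.
Qed.

Lemma S4_lb n m : 4 * m <= n -> m * (m * (m * (m * 1))) <= S4 P1 n.
Proof.
move=> hm; rewrite /S4.
apply: (@range_lb (fun a => \sum_(b < n.+1) \sum_(c < n.+1) \sum_(d < n.+1) P1 a b c d) 1 m) => [a ha|]; last by lia.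
apply: (@range_lb (fun b => \sum_(c < n.+1) \sum_(d < n.+1) P1 a b c d) (1 + m) m) => [b hb|]; last by lia.
apply: (@range_lb (fun c => \sum_(d < n.+1) P1 a b c d) (1 + m + m) m) => [c hc|]; last by lia.
apply: (@range_lb (fun d => P1 a b c d) (1 + m + m + m) m) => [d hd|]; last by lia.
rewrite /P1; lia.
Qed.

Lemma nat_facts n : 7 <= n ->
  [/\ num_edges_G n <= S4 P1 n + S4 P1 n,
      S4 P1 n + S4 P1 n <= num_edges_G n + 5 * (n.+1 * (n.+1 * (n.+1 * 1))),
      num_edges_SG n <= S4 P1 n + S4 P1 n + S4 P1 n,
      S4 P1 n + S4 P1 n + S4 P1 n <= num_edges_SG n + 4 * (n.+1 * (n.+1 * (n.+1 * 1))) &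
      exists m, n.+1 <= 8 * m /\ m * (m * (m * (m * 1))) <= S4 P1 n].
Proof.
move=> hn; split; [exact: G_up | exact: G_lo | exact: SG_up | exact: SG_lo |].
exists (n %/ 4); split; first by lia.
apply: S4_lb; lia.
Qed.

Lemma INR_addn m n : INR (m + n) = (INR m + INR n)%R.
Proof. exact: plus_INR. Qed.
Lemma INR_muln m n : INR (m * n) = (INR m * INR n)%R.
Proof. exact: mult_INR. Qed.
Lemma INR_leq m n : m <= n -> (INR m <= INR n)%R.
Proof. by move/leP; apply: le_INR. Qed.

Open Scope R_scope.
Lemma real_key (x t s M eps : R) : 0 < eps -> 16384 <= M -> 10240 < eps * M ->
  x <= 2*s -> 2*s <= x + 5*M^3 -> t <= 3*s -> 3*s <= t + 4*M^3 -> M^4 <= 4096*s ->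
  Rabs (x/t - 2/3) < eps.
Proof.
intros He HM HeM H1 H2 H3 H4 H5.
assert (HC: 0 < M^3) by (apply pow_lt; lra).
assert (E4: M^4 = M * M^3) by ring.
rewrite E4 in H5.
assert (HMC: M * M^3 >= 16384 * M^3) by nra.
assert (Ht: 4096 * t >= 2 * (M * M^3)) by nra.
assert (Hep: eps * (4096 * t) >= eps * (2 * (M * M^3))) by nra.
assert (HeC: eps * M * M^3 > 10240 * M^3) by nra.
assert (Het: eps * t > 5 * M^3) by nra.
assert (Htp: 0 < t) by nra.
replace (x/t - 2/3) with ((3*x - 2*t) / (3*t)) by (field; lra).
apply Rabs_def1.
- unfold Rdiv; apply (Rmult_lt_reg_r (3*t)); [lra|].
  rewrite Rmult_assoc Rinv_l; lra.
- unfold Rdiv; apply (Rmult_lt_reg_r (3*t)); [lra|].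
  rewrite Rmult_assoc Rinv_l; lra.
Qed.

Lemma inv_lt (x c : R) : 0 < x -> / x < c -> 1 < c * x.
Proof.
move=> hx hc; have e : x * / x = 1 by field; lra.
nra.
Qed.

Theorem proposition2 :
  Un_cv (fun n : nat => INR (num_edges_G n) / INR (num_edges_SG n)) (2 / 3).
Proof.
move=> eps He.
have He' : 0 < Rmin (eps / 10240) (/ 16384).
  by apply: Rmin_glb_lt; [lra | apply: Rinv_0_lt_compat; lra].
have [K [HK HK0]] := archimed_cor1 _ He'.
have HKp : 0 < INR K by apply: lt_0_INR.
have HK1 : 1 < (eps / 10240) * INR K.
  by apply: inv_lt => //; apply: (Rlt_le_trans _ _ _ HK); apply: Rmin_l.
have HK2 : 1 < (/ 16384) * INR K.
  by apply: inv_lt => //; apply: (Rlt_le_trans _ _ _ HK); apply: Rmin_r.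
exists K => n hn.
have HnK : INR K <= INR n by apply: le_INR.
have hn' : is_true (leq 7 n).
  apply/leP; apply: INR_le.
  have -> : INR 7 = 7 by rewrite INR_IZR_INZ.
  lra.
have [h1 h2 h3 h4 [m [h5 h6]]] := nat_facts hn'.
move: (S4 P1 n) (num_edges_G n) (num_edges_SG n) h1 h2 h3 h4 h5 h6 => s G T h1 h2 h3 h4 h5 h6.
move: h1 h2 h3 h4 h5 h6 => /INR_leq h1 /INR_leq h2 /INR_leq h3 /INR_leq h4 /INR_leq h5 /INR_leq h6.
rewrite !INR_addn in h1 h2 h3 h4; rewrite !INR_muln in h2 h4 h5 h6.
rewrite /R_dist.
have HM : INR n.+1 = INR n + 1 by rewrite S_INR.
rewrite HM in h2 h4 h5.
have e4 : INR 4 = 4 by rewrite INR_IZR_INZ.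
have e5 : INR 5 = 5 by rewrite INR_IZR_INZ.
have e8 : INR 8 = 8 by rewrite INR_IZR_INZ.
rewrite e4 in h4; rewrite e5 in h2; rewrite e8 in h5.
have e1 : INR 1 = 1 by [].
rewrite e1 in h2 h4 h6.
have hm0 : 0 <= INR m by apply: pos_INR.
have hn0 : 0 <= INR n by apply: pos_INR.
have h7 : (INR n + 1) ^ 4 <= 4096 * INR s.
  have : (INR n + 1) ^ 4 <= (8 * INR m) ^ 4 by apply: pow_incr; lra.
  have -> : (8 * INR m) ^ 4 = 4096 * (INR m * (INR m * (INR m * (INR m * 1)))) by ring.
  lra.

apply: (real_key (s := INR s) (M := INR n + 1)).
- exact: He.
- lra.
- nra.
- lra.
- lra.
- lra.
- lra.
- lra.
Qed.
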